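(* Fix $P_1,P_2,N_2,N_3>0$ and let $R^{\rm lo}_G(Q)$ denote the lower bound of Theorem 5 as a function of the state variance $Q$, i.e. $$R^{\rm lo}_G(Q)=\max\min\Big\{R(\alpha,\beta\bar\gamma P_1,\tilde Q,N_2+\gamma P_1),\ R(\alpha,\beta\bar\gamma P_1,\tilde Q,N_3+\gamma P_1)+\tfrac12\log\Big(1+\tfrac{(\sqrt{\bar\beta\bar\gamma P_1}+\sqrt{P_2})^2}{N_3+D+\gamma P_1+\beta\bar\gamma P_1}\Big)\Big\}$$ with $\bar\beta=1-\beta$, $\bar\gamma=1-\gamma$, $D=QN_2/(N_2+\gamma P_1)$, $\alpha_2=\frac{(\sqrt{\bar\beta\bar\gamma P_1}+\sqrt{P_2})^2}{(\sqrt{\bar\beta\bar\gamma P_1}+\sqrt{P_2})^2+\beta\bar\gamma P_1+N_3+D+\gamma P_1}$, $\tilde Q=\tilde Q_S(\alpha_2,Q,D)$, maximized over $\beta,\gamma\in[0,1]$ and $\alpha\in\mathcal A(\beta\bar\gamma P_1,\tilde Q,N_2+\gamma P_1)\cap\mathcal A(\beta\bar\gamma P_1,\tilde Q,N_3+\gamma P_1)$. Then $$\lim_{Q\to\infty}R^{\rm lo}_G(Q)=\frac12\log\Big(1+\frac{P_1}{\max(N_2,N_3)}\Big).$$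
   Context: For nonnegative $t,D,P,Q,N$: $\tilde Q_S(t,Q,D):=(1-t)^2Q-t(t-2)D$, $R(\alpha,P,Q,N):=\frac12\log\Big(\frac{P(P+Q+N)}{PQ(1-\alpha)^2+N(P+\alpha^2Q)}\Big)$, and $\mathcal A(P,Q,N):=\{\alpha\in\mathbb R:R(\alpha,P,Q,N)\ge0\}$. Logarithms base 2. *)

(* Defs.v *)
From Stdlib Require Import Reals Lra.
Open Scope R_scope.

Definition log2 (x : R) : R := ln x / ln 2.

Definition QtS (t Q D : R) : R := (1 - t) ^ 2 * Q - t * (t - 2) * D.

Definition Rnum (P Q N : R) : R := P * (P + Q + N).
Definition Rden (alpha P Q N : R) : R :=
  P * Q * (1 - alpha) ^ 2 + N * (P + alpha ^ 2 * Q).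

Definition Rrate (alpha P Q N : R) : R :=
  / 2 * log2 (Rnum P Q N / Rden alpha P Q N).

(* alpha \in A(P,Q,N) : R(alpha,P,Q,N) >= 0, where R is required to be a
   genuine real number (argument of the log finite and positive); when the
   argument is 0 (e.g. P = 0) R = -infinity and alpha is not in A. *)
Definition inA (alpha P Q N : R) : Prop :=
  0 < Rnum P Q N /\ 0 < Rden alpha P Q N /\ 0 <= Rrate alpha P Q N.

Definition loSet (P1 P2 N2 N3 Q : R) (r : R) : Prop :=
  exists beta gamma alpha : R,
    0 <= beta <= 1 /\ 0 <= gamma <= 1 /\
    let bbeta := 1 - beta in
    let bgamma := 1 - gamma in
    let D := Q * N2 / (N2 + gamma * P1) in
    let S := (sqrt (bbeta * bgamma * P1) + sqrt P2) ^ 2 in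
    let alpha2 := S / (S + beta * bgamma * P1 + N3 + D + gamma * P1) in
    let Qt := QtS alpha2 Q D in
    let P := beta * bgamma * P1 in
    inA alpha P Qt (N2 + gamma * P1) /\
    inA alpha P Qt (N3 + gamma * P1) /\
    r = Rmin (Rrate alpha P Qt (N2 + gamma * P1))
             (Rrate alpha P Qt (N3 + gamma * P1)
              + / 2 * log2 (1 + S / (N3 + D + gamma * P1 + beta * bgamma * P1))).

(* Main.v *)
Require Import Defs.
From Stdlib Require Import Reals Lra Psatz ClassicalEpsilon.
Open Scope R_scope.

Lemma div_le a b c d : 0 < b -> 0 < d -> a * d <= c * b -> a / b <= c / d.
Proof.
  intros Hb Hd H.
  assert (Hu : a / b * b = a) by (field; lra).
  assert (Hv : c / d * d = c) by (field; lra).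
  set (u := a / b) in *. set (v := c / d) in *.
  assert (Hbd : 0 < b * d) by nra.
  destruct (Rle_or_lt u v) as [|Hlt]; [assumption|].
  exfalso. assert ((u - v) * (b * d) > 0) by nra. nra.
Qed.

Lemma ln_le' x y : 0 < x -> x <= y -> ln x <= ln y.
Proof.
  intros Hx [H|H]. left; apply ln_increasing; auto. subst; lra.
Qed.

Lemma ln_upper x : 0 < x -> ln x <= x - 1.
Proof. intros Hx. pose proof (exp_ineq1_le (ln x)). rewrite exp_ln in H; lra. Qed.

Lemma ln_lower x : 0 < x -> 1 - / x <= ln x.
Proof.
  intros Hx. pose proof (ln_upper (/ x) (Rinv_0_lt_compat _ Hx)).
  rewrite ln_Rinv in H; lra.
Qed.

Lemma ln2pos : 0 < ln 2.
Proof. pose proof ln_lt_2; lra. Qed.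

Lemma log2_le x y : 0 < x -> x <= y -> log2 x <= log2 y.
Proof.
  intros. unfold log2, Rdiv. apply Rmult_le_compat_r.
  left; apply Rinv_0_lt_compat, ln2pos. now apply ln_le'.
Qed.

Lemma Rrate_upper a P Q N : 0 < P -> 0 < N -> 0 <= Q -> 0 < Rden a P Q N ->
  Rrate a P Q N <= / 2 * log2 (1 + P / N).
Proof.
  intros HP HN HQ HD. unfold Rrate. apply Rmult_le_compat_l; [lra|].
  apply log2_le.
  - unfold Rdiv; apply Rmult_lt_0_compat; [unfold Rnum; nra|now apply Rinv_0_lt_compat].
  - replace (1 + P / N) with ((P + N) / N) by (field; lra).
    apply div_le; auto.
    assert (E : (P + N) * Rden a P Q N - N * Rnum P Q N = Q * (P * (1 - a) - N * a) ^ 2)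
      by (unfold Rden, Rnum; ring).
    assert (0 <= Q * (P * (1 - a) - N * a) ^ 2) by (apply Rmult_le_pos; auto; apply pow2_ge_0).
    nra.
Qed.

Lemma R_witness a P Q N M : 0 < P -> 0 < N -> N <= M -> 0 < Q -> a = P / (P + M) ->
  0 < Rden a P Q N /\ Rden a P Q N <= Rnum P Q N /\
  0 <= Rrate a P Q N /\
  / 2 * log2 (1 + P / M) - / 2 * (M / (P + Q)) / ln 2 <= Rrate a P Q N.
Proof.
  intros HP HN HNM HQ Ha.
  assert (Ha1 : a * (P + M) = P) by (subst; field; lra).
  assert (Ha0 : 0 < a) by (subst; apply Rdiv_lt_0_compat; lra).
  assert (Hden : 0 < Rden a P Q N).
  { unfold Rden. assert (0 <= (1-a)^2) by (apply pow2_ge_0).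
    assert (0 <= a^2) by (apply pow2_ge_0).
    assert (0 <= P * Q * (1 - a) ^ 2) by (apply Rmult_le_pos; nra).
    assert (0 < P + a ^ 2 * Q) by nra. nra. }
  assert (Hup : Rden a P Q N <= P * M * (Q + P + M) / (P + M)).
  { assert (E: P * Q * (1 - a) ^ 2 + M * (P + a ^ 2 * Q) = P * M * (Q + P + M) / (P + M)).
    { subst. field. lra. }
    rewrite <- E. unfold Rden. assert (0 <= a^2) by apply pow2_ge_0.
    assert (0 <= (M - N) * (P + a ^ 2 * Q)) by (apply Rmult_le_pos; nra). nra. }
  assert (Hnum : 0 < Rnum P Q N) by (unfold Rnum; nra).
  assert (Hle : Rden a P Q N <= Rnum P Q N).
  { assert (E2 : P * (1 - a) ^ 2 + M * a ^ 2 = P * M / (P + M)) by (subst; field; lra).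
    assert (E3 : P - P * M / (P + M) = P * P / (P + M)) by (field; lra).
    assert (0 < P * P / (P + M)) by (apply Rdiv_lt_0_compat; nra).
    unfold Rden, Rnum. assert (0 <= a^2) by apply pow2_ge_0.
    assert (0 <= (M - N) * a ^ 2 * Q) by (apply Rmult_le_pos; [apply Rmult_le_pos|]; nra).
    assert (0 <= Q * (P * P / (P + M))) by nra.
    assert (E5 : Rnum P Q N - Rden a P Q N = P * P + Q * (P * P / (P + M)) + (M - N) * a ^ 2 * Q)
      by (unfold Rnum, Rden; rewrite <- E3, <- E2; ring).
    unfold Rnum, Rden in E5. nra. }
  assert (Hr : 0 < Rnum P Q N / Rden a P Q N) by (apply Rdiv_lt_0_compat; auto).
  split; [auto|split; [auto|split]].
  - unfold Rrate. apply Rmult_le_pos; [lra|]. unfold log2, Rdiv at 1.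
    apply Rmult_le_pos; [|left; apply Rinv_0_lt_compat, ln2pos].
    rewrite <- ln_1. apply ln_le'; [lra|].
    replace 1 with (Rden a P Q N / Rden a P Q N) by (field; lra).
    apply div_le; auto; nra.
  - unfold Rrate, log2.
    assert (Hy : (1 + P / M) * ((P + Q) / (P + Q + M)) <= Rnum P Q N / Rden a P Q N).
    { replace ((1 + P / M) * ((P + Q) / (P + Q + M))) with
        ((P + Q) / (P * M * (Q + P + M) / (P + M) / P)) by (field; lra).
      apply div_le; [apply Rdiv_lt_0_compat; [apply Rdiv_lt_0_compat; nra | lra] | auto |].
      assert (E4 : P * M * (Q + P + M) / (P + M) / P * P = P * M * (Q + P + M) / (P + M))
        by (field; lra).
      unfold Rnum. nra. }
    assert (H1 : 0 < 1 + P / M) by (assert (0 < P / M) by (apply Rdiv_lt_0_compat; lra); lra).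
    assert (H2 : 0 < (P + Q) / (P + Q + M)) by (apply Rdiv_lt_0_compat; lra).
    pose proof (ln_le' _ _ (Rmult_lt_0_compat _ _ H1 H2) Hy) as Hl.
    rewrite ln_mult in Hl by auto.
    pose proof (ln_lower _ H2) as Hl2.
    replace (1 - / ((P + Q) / (P + Q + M))) with (- (M / (P + Q))) in Hl2 by (field; lra).
    pose proof ln2pos.
    assert (Hi : 0 < / ln 2) by (apply Rinv_0_lt_compat; lra).
    unfold Rdiv in *. nra.
Qed.

Lemma Rdiv_le_0_compat a b : 0 <= a -> 0 < b -> 0 <= a / b.
Proof. intros. unfold Rdiv. apply Rmult_le_pos; [auto|left; apply Rinv_0_lt_compat; auto]. Qed.

Lemma inA_P a P Q N : 0 <= P -> inA a P Q N -> 0 < P.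
Proof.
  intros HP [Hn _]. unfold Rnum in Hn. destruct HP as [|E]; auto.
  subst. lra.
Qed.

Lemma elem_bound P1 P2 N2 N3 Q r : 0 < P1 -> 0 < P2 -> 0 < N2 -> 0 < N3 -> 0 < Q ->
  loSet P1 P2 N2 N3 Q r ->
  r <= / 2 * log2 (1 + P1 / N2) /\
  r <= / 2 * log2 (1 + P1 / N3)
       + / 2 * ((sqrt P1 + sqrt P2) ^ 2 * (N2 + P1) / N2 / Q) / ln 2.
Proof.
  intros HP1 HP2 HN2 HN3 HQ [b [g [al [Hb [Hg H]]]]]. cbv zeta in H.
  destruct H as [HA2 [HA3 Hr]].
  set (P := b * (1 - g) * P1) in *.
  assert (HgP : 0 <= g * P1) by nra.
  set (D := Q * N2 / (N2 + g * P1)) in *.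
  set (S := (sqrt ((1 - b) * (1 - g) * P1) + sqrt P2) ^ 2) in *.
  set (a2 := S / (S + P + N3 + D + g * P1)) in *.
  assert (HP0 : 0 <= P) by (unfold P; apply Rmult_le_pos; [apply Rmult_le_pos|]; lra).
  assert (HPp := inA_P _ _ _ _ HP0 HA2).
  assert (HD : 0 <= D) by (unfold D; apply Rdiv_le_0_compat; nra).
  assert (HS : 0 <= S) by (unfold S; apply pow2_ge_0).
  assert (Ha2 : 0 <= a2 <= 1).
  { unfold a2. split. apply Rdiv_le_0_compat; lra.
    replace 1 with ((S + P + N3 + D + g * P1) / (S + P + N3 + D + g * P1)) by (field; nra).
    assert (0 < S + P + N3 + D + g * P1) by nra.
    apply div_le; try lra. apply Rmult_le_compat_r; lra. }
  assert (HQt : 0 <= QtS a2 Q D).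
  { unfold QtS. assert (0 <= (1 - a2) ^ 2) by apply pow2_ge_0.
    assert (0 <= a2 * (2 - a2) * D) by (apply Rmult_le_pos; [|lra]; nra). nra. }
  destruct HA2 as [_ [Hd2 _]]. destruct HA3 as [_ [Hd3 _]].
  pose proof (Rrate_upper al P _ (N2 + g * P1) HPp ltac:(nra) HQt Hd2) as U2.
  pose proof (Rrate_upper al P _ (N3 + g * P1) HPp ltac:(nra) HQt Hd3) as U3.
  assert (HPle : P <= P1) by (unfold P; nra).
  assert (L2 : / 2 * log2 (1 + P / (N2 + g * P1)) <= / 2 * log2 (1 + P1 / N2)).
  { apply Rmult_le_compat_l; [lra|]. apply log2_le.
    assert (0 <= P / (N2 + g * P1)) by (apply Rdiv_le_0_compat; nra). lra.
    apply Rplus_le_compat_l, div_le; nra. }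
  assert (L3 : / 2 * log2 (1 + P / (N3 + g * P1)) <= / 2 * log2 (1 + P1 / N3)).
  { apply Rmult_le_compat_l; [lra|]. apply log2_le.
    assert (0 <= P / (N3 + g * P1)) by (apply Rdiv_le_0_compat; nra). lra.
    apply Rplus_le_compat_l, div_le; nra. }
  set (den := N3 + D + g * P1 + P).
  assert (Hden : 0 < den) by (unfold den; lra).
  set (K := (sqrt P1 + sqrt P2) ^ 2 * (N2 + P1) / N2).
  assert (HSK : S <= (sqrt P1 + sqrt P2) ^ 2).
  { unfold S. assert (0 <= sqrt ((1 - b) * (1 - g) * P1)) by apply sqrt_pos.
    assert (sqrt ((1 - b) * (1 - g) * P1) <= sqrt P1) by (apply sqrt_le_1_alt; nra).
    assert (0 <= sqrt P2) by apply sqrt_pos. nra. }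
  assert (HDl : Q * N2 / (N2 + P1) <= D) by (unfold D; apply div_le; try lra;
    assert (0 <= Q * N2 * (P1 - g * P1)) by (apply Rmult_le_pos; nra); nra).
  assert (HC : S / den <= K / Q).
  { unfold K. apply div_le; auto.
    assert (E : Q * N2 / (N2 + P1) * (N2 + P1) = Q * N2) by (field; lra).
    assert (E2 : (sqrt P1 + sqrt P2) ^ 2 * (N2 + P1) / N2 * N2 = (sqrt P1 + sqrt P2) ^ 2 * (N2 + P1))
      by (field; lra).
    assert (Q * N2 <= den * (N2 + P1)) by (unfold den; nra).
    assert (S * (Q * N2) <= (sqrt P1 + sqrt P2) ^ 2 * (den * (N2 + P1))).
    { apply Rmult_le_compat; nra. }
    nra. }
  assert (Hx : 0 <= S / den) by (apply Rdiv_le_0_compat; lra).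
  assert (HCb : / 2 * log2 (1 + S / den) <= / 2 * (K / Q) / ln 2).
  { unfold log2. pose proof (ln_upper (1 + S / den) ltac:(lra)).
    pose proof ln2pos. assert (0 < / ln 2) by (apply Rinv_0_lt_compat; lra).
    unfold Rdiv in *. nra. }
  assert (r <= Rrate al P (QtS a2 Q D) (N2 + g * P1)) by (rewrite Hr; apply Rmin_l).
  assert (r <= Rrate al P (QtS a2 Q D) (N3 + g * P1) + / 2 * log2 (1 + S / den))
    by (rewrite Hr; apply Rmin_r).
  split; lra.
Qed.

Lemma QtS_same t Q : QtS t Q Q = Q.
Proof. unfold QtS; ring. Qed.

Lemma log_term_nonneg x : 0 <= x -> 0 <= / 2 * log2 (1 + x).
Proof.
  intros. apply Rmult_le_pos; [lra|]. unfold log2, Rdiv.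
  apply Rmult_le_pos; [|left; apply Rinv_0_lt_compat, ln2pos].
  rewrite <- ln_1. apply ln_le'; lra.
Qed.

Lemma witness P1 P2 N2 N3 Q : 0 < P1 -> 0 < P2 -> 0 < N2 -> 0 < N3 -> 0 < Q ->
  exists r0, loSet P1 P2 N2 N3 Q r0 /\
   / 2 * log2 (1 + P1 / Rmax N2 N3) - / 2 * (Rmax N2 N3 / (P1 + Q)) / ln 2 <= r0.
Proof.
  intros HP1 HP2 HN2 HN3 HQ.
  set (M := Rmax N2 N3).
  assert (HM2 : N2 <= M) by apply Rmax_l. assert (HM3 : N3 <= M) by apply Rmax_r.
  set (a := P1 / (P1 + M)).
  destruct (R_witness a P1 Q N2 M HP1 HN2 HM2 HQ eq_refl) as [A1 [A2 [A3 A4]]].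
  destruct (R_witness a P1 Q N3 M HP1 HN3 HM3 HQ eq_refl) as [B1 [B2 [B3 B4]]].
  assert (HD1 : Q * N2 / (N2 + 0 * P1) = Q) by (field; lra).
  eexists. split.
  - exists 1, 0, a. split; [lra|]. split; [lra|]. cbv zeta.
    rewrite HD1. replace (1 * (1 - 0) * P1) with P1 by ring.
    replace (N2 + 0 * P1) with N2 by ring. replace (N3 + 0 * P1) with N3 by ring.
    rewrite QtS_same.
    split; [split; [unfold Rnum; nra|auto]|].
    split; [split; [unfold Rnum; nra|auto]|].
    reflexivity.
  - apply Rmin_glb; [lra|].
    match goal with |- _ <= _ + ?Z => assert (0 <= Z) end.
    { apply log_term_nonneg. apply Rdiv_le_0_compat; [apply pow2_ge_0|lra]. }
    lra.
Qed.

Theorem mainTheorem9 (P1 P2 N2 N3 : R) :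
  0 < P1 -> 0 < P2 -> 0 < N2 -> 0 < N3 ->
  exists RloG : R -> R,
    (forall Q : R, 0 < Q -> is_lub (loSet P1 P2 N2 N3 Q) (RloG Q)) /\
    (forall eps : R, 0 < eps -> exists M : R, forall Q : R, M < Q ->
       Rabs (RloG Q - / 2 * log2 (1 + P1 / Rmax N2 N3)) < eps).
Proof.
  intros HP1 HP2 HN2 HN3.
  set (F := fun Q => epsilon (inhabits 0) (fun m => is_lub (loSet P1 P2 N2 N3 Q) m)).
  assert (HF : forall Q, 0 < Q -> is_lub (loSet P1 P2 N2 N3 Q) (F Q)).
  { intros Q HQ. unfold F. apply epsilon_spec.
    destruct (witness P1 P2 N2 N3 Q HP1 HP2 HN2 HN3 HQ) as [r0 [Hr0 _]].
    destruct (completeness (loSet P1 P2 N2 N3 Q)) as [m Hm].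
    - exists (/ 2 * log2 (1 + P1 / N2)). intros r Hr.
      apply (elem_bound P1 P2 N2 N3 Q r); auto.
    - exists r0; auto.
    - exists m; auto. }
  exists F. split; [exact HF|].
  intros eps Heps.
  set (K := (sqrt P1 + sqrt P2) ^ 2 * (N2 + P1) / N2).
  set (M := Rmax N2 N3).
  assert (HM2 : N2 <= M) by apply Rmax_l. assert (HM3 : N3 <= M) by apply Rmax_r.
  assert (HK : 0 <= K) by (apply Rdiv_le_0_compat; [apply Rmult_le_pos; [apply pow2_ge_0|lra]|lra]).
  pose proof ln2pos as Hl2.
  assert (Hel : 0 < eps * ln 2) by nra.
  exists ((K + M) / (eps * ln 2) + 1). intros Q HQ.
  assert (HE : (K + M) / (eps * ln 2) * (eps * ln 2) = K + M) by (field; lra).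
  assert (H0 : 0 <= (K + M) / (eps * ln 2)) by (apply Rdiv_le_0_compat; lra).
  assert (HQ0 : 0 < Q) by lra.
  assert (HQb : K + M < Q * (eps * ln 2)) by nra.
  destruct (HF Q HQ0) as [Hub Hlub].
  set (L := / 2 * log2 (1 + P1 / M)).
  destruct (witness P1 P2 N2 N3 Q HP1 HP2 HN2 HN3 HQ0) as [r0 [Hr0 Hlow]].
  pose proof (Hub r0 Hr0) as Hlo. fold M L in Hlow.
  set (C := / 2 * (K / Q) / ln 2).
  assert (HC0 : 0 <= C).
  { unfold C, Rdiv. apply Rmult_le_pos; [apply Rmult_le_pos; [lra|]|left; apply Rinv_0_lt_compat; lra].
    apply Rmult_le_pos; [lra|left; apply Rinv_0_lt_compat; lra]. }
  assert (Hup : F Q <= L + C).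
  { apply Hlub. intros r Hr.
    destruct (elem_bound P1 P2 N2 N3 Q r HP1 HP2 HN2 HN3 HQ0 Hr) as [U2 U3].
    fold K in U3. fold C in U3. unfold L, M.
    destruct (Rle_dec N2 N3).
    - rewrite Rmax_right by lra. lra.
    - rewrite Rmax_left by lra. lra. }
  assert (HCe : C < eps).
  { unfold C. assert (E : / 2 * (K / Q) / ln 2 = K / (2 * (Q * ln 2))) by (field; lra).
    rewrite E. apply Rmult_lt_reg_r with (2 * (Q * ln 2)); [nra|].
    replace (K / (2 * (Q * ln 2)) * (2 * (Q * ln 2))) with K by (field; lra). nra. }
  assert (HLe : / 2 * (M / (P1 + Q)) / ln 2 < eps).
  { assert (E : / 2 * (M / (P1 + Q)) / ln 2 = M / (2 * ((P1 + Q) * ln 2))) by (field; lra).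
    rewrite E. apply Rmult_lt_reg_r with (2 * ((P1 + Q) * ln 2)); [nra|].
    replace (M / (2 * ((P1 + Q) * ln 2)) * (2 * ((P1 + Q) * ln 2))) with M by (field; lra). nra. }
  unfold Rabs. destruct (Rcase_abs _); lra.
Qed.
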